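(* Let $\mathcal{Q}$ be a small Cauchy-bilateral quantaloid. Then the Cauchy completion $\mathbb{A}_{\mathsf{cc}}$ of every symmetric $\mathcal{Q}$-category $\mathbb{A}$ is symmetric, and the symmetrisation $\mathbb{C}_{\mathsf s}$ of every Cauchy complete $\mathcal{Q}$-category $\mathbb{C}$ is Cauchy complete. (That is, Cauchy completion restricts to an endofunctor of $\mathsf{SymCat}(\mathcal{Q})$ and symmetrisation restricts to an endofunctor of the full subcategory of Cauchy complete $\mathcal{Q}$-categories.)
   Context: A quantaloid is a category enriched in $\mathsf{Sup}$ (complete lattices and supremum-preserving maps). An involution on $\mathcal{Q}$ is an assignment $f\mapsto f^{\mathsf o}$ on morphisms, identity on objects, sending $f\colon X\to Y$ to $f^{\mathsf o}\colon Y\to X$, monotone, with $(g\circ f)^{\mathsf o}=f^{\mathsf o}\circ g^{\mathsf o}$ and $f^{\mathsf{oo}}=f$. $\mathcal{Q}$ is Cauchy-bilateral if it is involutive and for every object $X$ and every family $(f_i\colon X\to X_i,\ g_i\colon X_i\to X)_{i\in I}$ of morphisms: if $f_k\circ g_j\circ f_j\le f_k$ and $g_j\circ f_j\circ g_k\le g_k$ for all $j,k\in I$ and $1_X\le\bigvee_i g_i\circ f_i$, then $1_X\le\bigvee_i(g_i\wedge f_i^{\mathsf o})\circ(g_i^{\mathsf o}\wedge f_i)$. A $\mathcal{Q}$-category $\mathbb{A}$: a set $\mathbb{A}_0$ of objects with types $tx\in\mathcal{Q}_0$ and homs $\mathbb{A}(y,x)\colon tx\to ty$ with $\mathbb{A}(z,y)\circ\mathbb{A}(y,x)\le\mathbb{A}(z,x)$,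 $1_{tx}\le\mathbb{A}(x,x)$. Functors $F\colon\mathbb{A}\to\mathbb{B}$: type-preserving object maps with $\mathbb{A}(y,x)\le\mathbb{B}(Fy,Fx)$. $\mathbb{A}$ is symmetric if $\mathbb{A}(x,y)=\mathbb{A}(y,x)^{\mathsf o}$. The symmetrisation $\mathbb{A}_{\mathsf s}$ has the same objects and $\mathbb{A}_{\mathsf s}(y,x)=\mathbb{A}(y,x)\wedge\mathbb{A}(x,y)^{\mathsf o}$. A distributor $\Phi\colon\mathbb{A}\to\mathbb{B}$: arrows $\Phi(y,x)\colon tx\to ty$ with $\mathbb{B}(y',y)\circ\Phi(y,x)\le\Phi(y',x)$, $\Phi(y,x)\circ\mathbb{A}(x,x')\le\Phi(y,x')$; composition $(\Psi\otimes\Phi)(z,x)=\bigvee_y\Psi(z,y)\circ\Phi(y,x)$, identities $\mathbb{A}(-,-)$, elementwise order. $\Phi$ is a left adjoint with right adjoint $\Phi^*$ if $\mathbb{A}\le\Phi^*\otimes\Phi$ and $\Phi\otimes\Phi^*\le\mathbb{B}$. $*_X$ is the one-object $\mathcal{Q}$-category of type $X$ with hom $1_X$; a presheaf on $\mathbb{A}$ is a distributor $*_X\to\mathbb{A}$, and it is representable if it equals $\mathbb{A}(-,a)$ for some $a$ of type $X$. $\mathbb{A}$ is Cauchy complete if every left adjoint presheaf on it is representable. The Cauchy completion $\mathbb{A}_{\mathsf{cc}}$ has objects the left adjoint presheaves $\phi\colon *_X\to\mathbb{A}$ (type $X$) and hom $\mathbb{A}_{\mathsf{cc}}(\psi,\phi)$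 the unique element of $\psi^*\otimes\phi$. *)

(* Defs.v *)
Set Implicit Arguments.

Record Quantaloid := {
  Obj : Type;
  Hom : Obj -> Obj -> Type;
  qle : forall X Y, Hom X Y -> Hom X Y -> Prop;
  qsup : forall X Y, (Hom X Y -> Prop) -> Hom X Y;
  qcomp : forall X Y Z, Hom Y Z -> Hom X Y -> Hom X Z;
  qid : forall X, Hom X X;
  qle_refl : forall X Y (f : Hom X Y), qle f f;
  qle_trans : forall X Y (f g h : Hom X Y), qle f g -> qle g h -> qle f h;
  qle_antisym : forall X Y (f g : Hom X Y), qle f g -> qle g f -> f = g;
  qsup_ub : forall X Y (S : Hom X Y -> Prop) f, S f -> qle f (qsup S);
  qsup_least : forall X Y (S : Hom X Y -> Prop) u,
      (forall f, S f -> qle f u) -> qle (qsup S) u;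
  qcomp_assoc : forall W X Y Z (h : Hom Y Z) (g : Hom X Y) (f : Hom W X),
      qcomp h (qcomp g f) = qcomp (qcomp h g) f;
  qcomp_id_l : forall X Y (f : Hom X Y), qcomp (qid Y) f = f;
  qcomp_id_r : forall X Y (f : Hom X Y), qcomp f (qid X) = f;
  qcomp_sup_l : forall X Y Z (g : Hom Y Z) (S : Hom X Y -> Prop),
      qcomp g (qsup S) = qsup (fun h => exists f, S f /\ h = qcomp g f);
  qcomp_sup_r : forall X Y Z (S : Hom Y Z -> Prop) (f : Hom X Y),
      qcomp (qsup S) f = qsup (fun h => exists g, S g /\ h = qcomp g f)
}.

Arguments qle {q X Y} _ _.
Arguments qsup {q X Y} _.
Arguments qcomp {q X Y Z} _ _.
Arguments qid {q} X.

Section Defs.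
Variable Q : Quantaloid.

Definition qmeet {X Y : Obj Q} (f g : Hom Q X Y) : Hom Q X Y :=
  qsup (fun h => qle h f /\ qle h g).

Definition qjoin {X Y : Obj Q} {I : Type} (F : I -> Hom Q X Y) : Hom Q X Y :=
  qsup (fun h => exists i, h = F i).

Record Involution := {
  inv : forall X Y : Obj Q, Hom Q X Y -> Hom Q Y X;
  inv_mono : forall X Y (f g : Hom Q X Y), qle f g -> qle (inv _ _ f) (inv _ _ g);
  inv_comp : forall X Y Z (g : Hom Q Y Z) (f : Hom Q X Y),
      inv _ _ (qcomp g f) = qcomp (inv _ _ f) (inv _ _ g);
  inv_inv : forall X Y (f : Hom Q X Y), inv _ _ (inv _ _ f) = f
}.

Arguments inv i {X Y} _.

Definition cauchy_bilateral (o : Involution) : Prop :=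
  forall (X : Obj Q) (I : Type) (Xi : I -> Obj Q)
         (f : forall i, Hom Q X (Xi i)) (g : forall i, Hom Q (Xi i) X),
    (forall j k, qle (qcomp (f k) (qcomp (g j) (f j))) (f k)) ->
    (forall j k, qle (qcomp (g j) (qcomp (f j) (g k))) (g k)) ->
    qle (qid X) (qjoin (fun i => qcomp (g i) (f i))) ->
    qle (qid X)
        (qjoin (fun i => qcomp (qmeet (g i) (inv o (f i)))
                               (qmeet (inv o (g i)) (f i)))).

Record QCatData := {
  ob : Type;
  ty : ob -> Obj Q;
  hom : forall y x : ob, Hom Q (ty x) (ty y)   (* hom y x = A(y,x) : tx -> ty *)
}.

Definition is_QCat (A : QCatData) : Prop :=
  (forall z y x, qle (qcomp (hom A z y) (hom A y x)) (hom A z x)) /\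
  (forall x, qle (qid (ty A x)) (hom A x x)).

Definition symmetric (o : Involution) (A : QCatData) : Prop :=
  forall x y, hom A x y = inv o (hom A y x).

Definition symmetrisation (o : Involution) (A : QCatData) : QCatData := {|
  ob := ob A;
  ty := ty A;
  hom := fun y x => qmeet (hom A y x) (inv o (hom A x y))
|}.

Definition RDist (A B : QCatData) : Type :=
  forall (y : ob B) (x : ob A), Hom Q (ty A x) (ty B y).

Definition is_dist {A B : QCatData} (Phi : RDist A B) : Prop :=
  (forall y' y x, qle (qcomp (hom B y' y) (Phi y x)) (Phi y' x)) /\
  (forall y x x', qle (qcomp (Phi y x) (hom A x x')) (Phi y x')).

Definition dcomp {A B C : QCatData} (Psi : RDist B C) (Phi : RDist A B)
  : RDist A C :=
  fun z x => qsup (fun h => exists y, h = qcomp (Psi z y) (Phi y x)).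

Definition did (A : QCatData) : RDist A A := hom A.

Definition dle {A B : QCatData} (Phi Phi' : RDist A B) : Prop :=
  forall y x, qle (Phi y x) (Phi' y x).

Definition adjoint {A B : QCatData} (Phi : RDist A B) (Psi : RDist B A) : Prop :=
  dle (did A) (dcomp Psi Phi) /\ dle (dcomp Phi Psi) (did B).

Definition left_adjoint {A B : QCatData} (Phi : RDist A B) : Prop :=
  exists Psi : RDist B A, is_dist Psi /\ adjoint Phi Psi.

Definition star (X : Obj Q) : QCatData := {|
  ob := unit;
  ty := fun _ => X;
  hom := fun _ _ => qid X
|}.

(** presheaves of type X on A are distributors *_X -> A *)
Definition representable {A : QCatData} {X : Obj Q} (phi : RDist (star X) A)
  : Prop :=
  exists (a : ob A) (e : ty A a = X),
    forall y : ob A,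
      phi y tt = eq_rect (ty A a) (fun Z => Hom Q Z (ty A y)) (hom A y a) X e.

Definition cauchy_complete (A : QCatData) : Prop :=
  forall (X : Obj Q) (phi : RDist (star X) A),
    is_dist phi -> left_adjoint phi -> representable phi.

(** * Cauchy completion.
    An object is a left adjoint presheaf phi together with its (unique)
    right adjoint rho = phi^*. *)
Record ccObj (A : QCatData) := {
  cc_type : Obj Q;
  cc_phi : RDist (star cc_type) A;
  cc_rho : RDist A (star cc_type);
  cc_phi_dist : is_dist cc_phi;
  cc_rho_dist : is_dist cc_rho;
  cc_adj : adjoint cc_phi cc_rho
}.

Definition cauchy_completion (A : QCatData) : QCatData := {|
  ob := ccObj A;
  ty := @cc_type A;
  hom := fun psi phi => dcomp (cc_rho psi) (cc_phi phi) tt tt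
|}.

End Defs.

(* Main.v *)
From Stdlib Require Import Setoid.
Require Import Defs.

Lemma le_sup {Q : Quantaloid} {X Y : Obj Q} (S : Hom Q X Y -> Prop) x f :
  S f -> qle x f -> qle x (qsup S).
Proof. intros Hf H. eapply qle_trans; [exact H|]. apply qsup_ub; exact Hf. Qed.

Lemma comp_mono_r {Q : Quantaloid} {X Y Z : Obj Q} (g : Hom Q Y Z) (f f' : Hom Q X Y) :
  qle f f' -> qle (qcomp g f) (qcomp g f').
Proof.
  intros H.
  assert (E : f' = qsup (fun h => h = f \/ h = f')).
  { apply qle_antisym.
    - apply qsup_ub; now right.
    - apply qsup_least; intros h [->| ->]; [exact H| apply qle_refl]. }
  rewrite E, qcomp_sup_l. apply qsup_ub. exists f; split; auto.
Qed.

Lemma comp_mono_l {Q : Quantaloid} {X Y Z : Obj Q} (g g' : Hom Q Y Z) (f : Hom Q X Y) :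
  qle g g' -> qle (qcomp g f) (qcomp g' f).
Proof.
  intros H.
  assert (E : g' = qsup (fun h => h = g \/ h = g')).
  { apply qle_antisym.
    - apply qsup_ub; now right.
    - apply qsup_least; intros h [->| ->]; [exact H| apply qle_refl]. }
  rewrite E, qcomp_sup_r. apply qsup_ub. exists g; split; auto.
Qed.

Lemma comp_mono {Q : Quantaloid} {X Y Z : Obj Q} (g g' : Hom Q Y Z) (f f' : Hom Q X Y) :
  qle g g' -> qle f f' -> qle (qcomp g f) (qcomp g' f').
Proof.
  intros; eapply qle_trans; [apply comp_mono_l; eassumption| apply comp_mono_r; assumption].
Qed.

Lemma meet_l {Q : Quantaloid} {X Y : Obj Q} (f g : Hom Q X Y) : qle (qmeet _ f g) f.
Proof. apply qsup_least; intros h [H _]; exact H. Qed.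
Lemma meet_r {Q : Quantaloid} {X Y : Obj Q} (f g : Hom Q X Y) : qle (qmeet _ f g) g.
Proof. apply qsup_least; intros h [_ H]; exact H. Qed.
Lemma meet_glb {Q : Quantaloid} {X Y : Obj Q} (f g h : Hom Q X Y) :
  qle h f -> qle h g -> qle h (qmeet _ f g).
Proof. intros; apply qsup_ub; split; assumption. Qed.

Lemma inv_adj {Q : Quantaloid} (o : Involution Q) {X Y : Obj Q} (f : Hom Q X Y) g :
  qle (inv o _ _ f) g -> qle f (inv o _ _ g).
Proof. intros H. rewrite <- (inv_inv o _ _ f). apply inv_mono; exact H. Qed.

Lemma inv_adj' {Q : Quantaloid} (o : Involution Q) {X Y : Obj Q} (f : Hom Q X Y) g :
  qle f (inv o _ _ g) -> qle (inv o _ _ f) g.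
Proof. intros H. rewrite <- (inv_inv o _ _ g). apply inv_mono; exact H. Qed.

Lemma inv_meet {Q : Quantaloid} (o : Involution Q) {X Y : Obj Q} (f g : Hom Q X Y) :
  inv o _ _ (qmeet _ f g) = qmeet _ (inv o _ _ f) (inv o _ _ g).
Proof.
  apply qle_antisym.
  - apply meet_glb; apply inv_mono; [apply meet_l|apply meet_r].
  - apply inv_adj. apply meet_glb; apply inv_adj'; [apply meet_l|apply meet_r].
Qed.

Lemma meet_comm {Q : Quantaloid} {X Y : Obj Q} (f g : Hom Q X Y) : qmeet _ f g = qmeet _ g f.
Proof. apply qle_antisym; apply meet_glb; (apply meet_l || apply meet_r). Qed.

Lemma inv_sup {Q : Quantaloid} (o : Involution Q) {X Y : Obj Q} (S : Hom Q X Y -> Prop) :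
  inv o _ _ (qsup S) = qsup (fun h => exists f, S f /\ h = inv o _ _ f).
Proof.
  apply qle_antisym.
  - apply inv_adj'. apply qsup_least. intros f Hf. apply inv_adj.
    apply qsup_ub. eauto.
  - apply qsup_least. intros h [f [Hf ->]]. apply inv_mono, qsup_ub, Hf.
Qed.

Lemma rho_inv_phi {Q : Quantaloid} (o : Involution Q) (A : QCatData Q) :
  cauchy_bilateral o -> symmetric o A ->
  forall X (phi : RDist (star Q X) A) (rho : RDist A (star Q X)),
  is_dist phi -> is_dist rho -> adjoint phi rho ->
  forall a, rho tt a = inv o _ _ (phi a tt).
Proof.
  intros CB S X phi rho [Pd1 Pd2] [Rd1 Rd2] [U C].
  assert (Cn : forall b a, qle (qcomp (phi b tt) (rho tt a)) (hom A b a)).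
  { intros b a. eapply qle_trans; [|apply (C b a)]. apply qsup_ub. exists tt. reflexivity. }
  pose proof (CB X (ob A) (ty A) (fun b => phi b tt) (fun b => rho tt b)) as Hb.
  cbv beta in Hb.
  assert (H1 : forall j k, qle (qcomp (phi k tt) (qcomp (rho tt j) (phi j tt))) (phi k tt)).
  { intros j k. rewrite qcomp_assoc. eapply qle_trans; [apply comp_mono_l, Cn|]. apply Pd1. }
  assert (H2 : forall j k, qle (qcomp (rho tt j) (qcomp (phi j tt) (rho tt k))) (rho tt k)).
  { intros j k. eapply qle_trans; [apply comp_mono_r, Cn|]. apply Rd2. }
  specialize (Hb H1 H2 (U tt tt)). clear H1 H2.
  intros a. apply qle_antisym.
  - eapply qle_trans.
    { rewrite <- (qcomp_id_l Q _ _ (rho tt a)) at 1. apply comp_mono_l. exact Hb. }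
    unfold qjoin. rewrite qcomp_sup_r. apply qsup_least. intros h [g [[b ->] ->]].
    rewrite <- qcomp_assoc.
    eapply qle_trans.
    { apply comp_mono; [apply meet_r|]. eapply qle_trans; [apply comp_mono_l, meet_r|]. apply Cn. }
    rewrite (S b a), <- inv_comp. apply inv_mono. apply Pd1.
  - apply inv_adj'.
    eapply qle_trans.
    { rewrite <- (qcomp_id_r Q _ _ (phi a tt)) at 1. apply comp_mono_r. exact Hb. }
    unfold qjoin. rewrite qcomp_sup_l. apply qsup_least. intros h [g [[b ->] ->]].
    rewrite qcomp_assoc.
    eapply qle_trans.
    { apply comp_mono; [|apply meet_l]. eapply qle_trans; [apply comp_mono_r, meet_l|]. apply Cn. }
    rewrite (S a b), <- inv_comp. apply inv_mono. apply Rd2.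
Qed.

Theorem corollary3p9 (Q : Quantaloid) (o : Involution Q) :
  cauchy_bilateral o ->
  (forall A : QCatData Q,
      is_QCat A -> symmetric o A -> symmetric o (cauchy_completion A)) /\
  (forall C : QCatData Q,
      is_QCat C -> cauchy_complete C -> cauchy_complete (symmetrisation o C)).
Proof.
  intros CB. split.
  - intros A HA S x y.
    assert (R : forall (z : ccObj A) a, cc_rho z tt a = inv o _ _ (cc_phi z a tt)).
    { intros z. apply (rho_inv_phi o A CB S); [apply cc_phi_dist|apply cc_rho_dist|apply cc_adj]. }
    simpl. unfold dcomp. rewrite inv_sup. apply qle_antisym; apply qsup_least.
    + intros h [b ->]. apply qsup_ub. exists (qcomp (cc_rho y tt b) (cc_phi x b tt)).
      split; [exists b; reflexivity|]. rewrite inv_comp, !R, inv_inv. reflexivity.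
    + intros h [g [[b ->] ->]]. apply qsup_ub. exists b.
      rewrite inv_comp, !R, inv_inv. reflexivity.
  - intros C HC CC X phi Pd [rho [Rd Adj]].
    set (Cs := symmetrisation o C) in *.
    assert (HsC : symmetric o Cs).
    { intros x y. simpl. rewrite inv_meet, inv_inv, meet_comm. reflexivity. }
    assert (Hcomp : forall z y x, qle (qcomp (hom Cs z y) (hom Cs y x)) (hom Cs z x)).
    { intros z y x. simpl. apply meet_glb.
      - eapply qle_trans; [apply comp_mono; apply meet_l|]. apply HC.
      - eapply qle_trans; [apply comp_mono; apply meet_r|].
        rewrite <- inv_comp. apply inv_mono, HC. }
    pose proof (rho_inv_phi o Cs CB HsC X phi rho Pd Rd Adj) as Rinv.
    destruct Adj as [U Cn0].
    assert (Cn : forall b c, qle (qcomp (phi b tt) (rho tt c)) (hom Cs b c)).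
    { intros b c. eapply qle_trans; [|apply (Cn0 b c)]. apply qsup_ub. exists tt. reflexivity. }
    pose (phit := (fun y (_ : unit) => qsup (fun h => exists b, h = qcomp (hom C y b) (phi b tt)))
                  : RDist (star Q X) C).
    pose (rhot := (fun (_ : unit) y => qsup (fun h => exists b, h = qcomp (rho tt b) (hom C b y)))
                  : RDist C (star Q X)).
    assert (PD : is_dist phit).
    { split.
      - intros y' y u. unfold phit. rewrite qcomp_sup_l. apply qsup_least.
        intros h [g [[b ->] ->]]. rewrite qcomp_assoc.
        apply le_sup with (f := qcomp (hom C y' b) (phi b tt)); [eauto|].
        apply comp_mono_l, HC.
      - intros y u u'. change (hom (star Q X) u u') with (qid X).
        rewrite qcomp_id_r. apply qle_refl. }
    assert (RD : is_dist rhot).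
    { split.
      - intros u' u y. change (hom (star Q X) u' u) with (qid X).
        rewrite qcomp_id_l. apply qle_refl.
      - intros u y y'. unfold rhot. rewrite qcomp_sup_r. apply qsup_least.
        intros h [g [[b ->] ->]]. rewrite <- qcomp_assoc.
        apply le_sup with (f := qcomp (rho tt b) (hom C b y')); [eauto|].
        apply comp_mono_r, HC. }
    assert (ADJ : adjoint phit rhot).
    { split.
      - intros [] []. eapply qle_trans; [apply (U tt tt)|].
        apply qsup_least. intros h [b ->].
        apply le_sup with (f := qcomp (rhot tt b) (phit b tt)); [exists b; reflexivity|].
        apply comp_mono.
        + apply le_sup with (f := qcomp (rho tt b) (hom C b b)); [eauto|].
          rewrite <- (qcomp_id_r Q _ _ (rho tt b)) at 1. apply comp_mono_r, (proj2 HC).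
        + apply le_sup with (f := qcomp (hom C b b) (phi b tt)); [eauto|].
          rewrite <- (qcomp_id_l Q _ _ (phi b tt)) at 1. apply comp_mono_l, (proj2 HC).
      - intros y z. apply qsup_least. intros h [u ->].
        unfold phit, rhot. rewrite qcomp_sup_l. apply qsup_least.
        intros h [g [[c ->] ->]]. rewrite qcomp_sup_r. apply qsup_least.
        intros h [g' [[b ->] ->]].
        rewrite <- qcomp_assoc. rewrite (qcomp_assoc _ _ _ _ _ (phi b tt)).
        eapply qle_trans.
        { apply comp_mono_r, comp_mono_l. eapply qle_trans; [apply Cn|]. apply meet_l. }
        eapply qle_trans; [apply comp_mono_r, HC|]. apply HC. }
    destruct (CC X phit PD (ex_intro _ rhot (conj RD ADJ))) as [a [e Hrep]].
    subst X. simpl in Hrep.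
    assert (Hphi_le : forall y, qle (phi y tt) (hom C y a)).
    { intros y. rewrite <- Hrep. unfold phit.
      apply le_sup with (f := qcomp (hom C y y) (phi y tt)); [eauto|].
      rewrite <- (qcomp_id_l Q _ _ (phi y tt)) at 1. apply comp_mono_l, (proj2 HC). }
    assert (Hrho_le : forall y, qle (rho tt y) (hom C a y)).
    { intros y. eapply qle_trans.
      { rewrite <- (qcomp_id_l Q _ _ (rho tt y)) at 1. apply comp_mono_l, (proj2 HC a). }
      rewrite <- (Hrep a). unfold phit. rewrite qcomp_sup_r. apply qsup_least.
      intros h [g [[b ->] ->]]. rewrite <- qcomp_assoc.
      eapply qle_trans; [apply comp_mono_r; eapply qle_trans; [apply Cn|apply meet_l]|].
      apply HC. }
    exists a, eq_refl. intros y. simpl. apply qle_antisym.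
    + apply meet_glb; [apply Hphi_le|].
      rewrite <- (inv_inv o _ _ (phi y tt)), <- Rinv. apply inv_mono, Hrho_le.
    + eapply qle_trans.
      { rewrite <- (qcomp_id_r Q _ _ (qmeet Q (hom C y a) (inv o _ _ (hom C a y)))) at 1.
        apply comp_mono_r. apply (U tt tt). }
      unfold dcomp. rewrite qcomp_sup_l. apply qsup_least.
      intros h [g [[b ->] ->]]. rewrite qcomp_assoc.
      eapply qle_trans; [apply comp_mono_l|apply (proj1 Pd y b tt)].
      eapply qle_trans; [apply comp_mono_r|apply (Hcomp y a b)].
      simpl. apply meet_glb; [apply Hrho_le|].
      rewrite Rinv. apply inv_mono, Hphi_le.
Qed.
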